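(* Let $C$ be a GHZ-preparation circuit on a set of qubits, built as follows: all qubits start in $\ket{0}$, a root qubit $v_0$ is put in the state $\ket{+}$ by a Hadamard gate, and then, layer by layer, CNOT gates are applied whose control is a qubit that has already been excited (entangled) and whose target is a qubit that has not yet been excited, so that every qubit is eventually excited and the ideal output is $\frac{1}{\sqrt 2}(\ket{0}^{\otimes n}+\ket{1}^{\otimes n})$. Suppose the gates and idle timesteps of $C$ form a rooted tree $T=(V,E)$ (the spacetime tree described in the context). For two qubits $i,j$, identified with the leaves of $T$ at the end of the circuit, define the edge set $$S_{i,j} := \mathrm{path}(i,\mathrm{lca}(i,j)) \cup \mathrm{path}(j,\mathrm{lca}(i,j)) \subseteq E,$$ where $\mathrm{lca}(i,j)$ is the lowest common ancestor of $i$ and $j$ in $T$ and $\mathrm{path}(a,b)$ is the set of edges of the unique path in $T$ from $a$ to $b$. Then a single-qubit $X$ or $Y$ error at a spacetime location $(q,t)$ of $C$ is detected by the measurement of $Z_iZ_j$ at the end of $C$ if and only if its corresponding edge in $T$ lies in $S_{i,j}$.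
   Context: Spacetime locations of $C$ are pairs $(q,t)$ with $q$ a qubit and $t$ a layer (timestep) of the circuit; errors are only considered at error-eligible locations, namely $(q,t)$ with $t\ge l_q$, where $l_q$ is the first layer in which qubit $q$ is excited (before that the qubit is in the ground state). The rooted tree $T$ has as root the root qubit at its excitation, its vertices are the excited spacetime locations, and its edges are the wire segments of a qubit between consecutive layers (idle timesteps or continuation through a gate) together with the CNOT links from control to newly excited target; each error-eligible spacetime location $(q,t)$ thus corresponds to an edge of $T$, and the final-time vertex of each qubit is a leaf. A single-qubit Pauli error $E$ at location $(q,t)$ is ''detected'' by the final measurement of $Z_iZ_j$ if it flips the outcome of that measurement relative to the error-free circuit (for the ideal GHZ state the outcome is $+1$), equivalently if $E$ anticommutes with the operator obtained by propagating $Z_iZ_j$ backwards through the circuit to that location. *)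

(* Defs.v *)
From mathcomp Require Import all_boot.
Set Implicit Arguments. Unset Strict Implicit. Unset Printing Implicit Defensive.

(* A GHZ-preparation circuit on qubits 'I_n is described by
   - r        : the root qubit (Hadamard at layer 0, so excited at layer 0),
   - tau q    : the layer l_q in which qubit q is excited
                (tau r = 0; for q <> r, the CNOT par q -> q is applied at layer tau q),
   - par q    : the control of the CNOT that excites q (q <> r).
   Layers 1..L are CNOT layers. Validity (as hypotheses of the theorem):
   the control is already excited, every qubit is excited by layer L, and
   within a layer the gates act on disjoint qubits. *)

Section Circuit.
Variables (n L : nat) (r : 'I_n) (par : 'I_n -> 'I_n) (tau : 'I_n -> nat).

Definition ghz_circuit : Prop :=
  [/\ tau r = 0,
      (forall q, q != r -> tau (par q) < tau q <= L) &
      (forall q q', q != r -> q' != r -> q != q' -> tau q = tau q' ->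
         par q != par q')].

(* Spacetime locations (q,t); vertex (q,t) of T is the location at the
   output of layer t. *)
Definition loc := ('I_n * nat)%type.

Definition vertex (v : loc) : Prop := tau v.1 <= v.2 <= L.

(* Parent in the spacetime tree T: wire segment (q,t-1)-(q,t) for t > l_q,
   CNOT link (par q, l_q - 1)-(q, l_q) at excitation; root (r,0) maps to itself. *)
Definition parent (v : loc) : loc :=
  let: (q, t) := v in
  if tau q < t then (q, t.-1)
  else if q == r then (q, t) else (par q, t.-1).

Definition anc (u v : loc) : Prop := exists k, iter k parent u = v.

Definition is_lca (a b w : loc) : Prop :=
  [/\ anc a w, anc b w & forall w', anc a w' -> anc b w' -> anc w w'].

(* Edges of T, each written as (child, parent). *)
Definition edge := (loc * loc)%type.

Definition tree_edge (e : edge) : Prop :=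
  vertex e.1 /\ e.1 <> (r, 0) /\ e.2 = parent e.1.

Definition path_up (a b : loc) (e : edge) : Prop :=
  exists v, [/\ e = (v, parent v), anc a v, anc v b & v <> b].

Definition S_set (i j : 'I_n) (e : edge) : Prop :=
  exists w, is_lca (i, L) (j, L) w /\
            (path_up (i, L) w e \/ path_up (j, L) w e).

Definition corr_edge (v : loc) : edge := (v, parent v).

(* Pauli operators up to phase, in symplectic form (x-part, z-part). *)
Definition pauli := (('I_n -> bool) * ('I_n -> bool))%type.

(* Conjugation by the CNOT layer t (CNOT c->t: x_t += x_c, z_c += z_t). *)
Definition layer_conj (t : nat) (P : pauli) : pauli :=
  (fun a => P.1 a (+) [&& a != r, tau a == t & P.1 (par a)],
   fun a => P.2 a (+) \big[addb/false]_(b | [&& b != r, tau b == t & par b == a]) P.2 b).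

Definition ZZ (i j : 'I_n) : pauli :=
  (fun _ => false, fun a => (a == i) (+) (a == j)).

(* back d P : P (given after layer L) propagated backwards to after layer L - d. *)
Fixpoint back (d : nat) (P : pauli) : pauli :=
  match d with
  | 0 => P
  | d'.+1 => layer_conj (L - d') (back d' P)
  end.

(* An error X (y = false) or Y (y = true) at location (q,t) is detected by the
   final Z_i Z_j measurement iff it anticommutes with Z_i Z_j propagated back
   to the output of layer t. *)
Definition detected (i j q : 'I_n) (t : nat) (y : bool) : bool :=
  let P := back (L - t) (ZZ i j) in P.2 q (+) (y && P.1 q).

End Circuit.

(* Main.v *)
Require Import Defs.
From mathcomp Require Import all_boot.
From mathcomp Require Import zify.

Section Proofs.
Variables (n L : nat) (r : 'I_n) (par : 'I_n -> 'I_n) (tau : 'I_n -> nat).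
Hypothesis Hc : ghz_circuit L r par tau.

Local Notation P := (parent r par tau).

Lemma tau_r : tau r = 0.
Proof. by case: Hc. Qed.

Lemma tau_par {q} : q != r -> tau (par q) < tau q.
Proof. by case: Hc => _ H _ /H /andP[]. Qed.

Lemma tau_le x : tau x <= L.
Proof.
case: (x =P r) => [->|/eqP xr]; first by rewrite tau_r.
by case: Hc => _ H _; case/andP: (H x xr).
Qed.

Lemma tau_pos {q} : q != r -> 0 < tau q.
Proof. move/tau_par; lia. Qed.

Lemma parent_keep {v : loc n} : tau v.1 < v.2 -> P v = (v.1, v.2.-1).
Proof. by case: v => q s /= h; rewrite /parent h. Qed.

Lemma parent_step {v : loc n} : tau v.1 <= v.2 -> 0 < v.2 ->
  (P v).2 = v.2.-1 /\ tau (P v).1 <= (P v).2.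
Proof.
case: v => q s /= h s0; rewrite /parent.
case: ltnP => h2 /=; first by split => //; lia.
have e : tau q = s by lia.
have qr : q != r by apply/eqP => qr; subst; rewrite tau_r in s0.
rewrite (negbTE qr) /=; split => //; have := tau_par qr; lia.
Qed.

Lemma parent_root : P (r, 0) = (r, 0).
Proof. by rewrite /parent ltn0 eqxx. Qed.

Lemma iter_root k : iter k P (r, 0) = (r, 0).
Proof. by elim: k => //= k ->; exact: parent_root. Qed.

Lemma time0 {v : loc n} : tau v.1 <= v.2 -> v.2 = 0 -> v = (r, 0).
Proof.
case: v => q s /= h e; subst s.
case: (q =P r) => [->|/eqP qr] //; have := tau_pos qr; lia.
Qed.

Lemma iter_time {v : loc n} k : tau v.1 <= v.2 ->
  (iter k P v).2 = v.2 - k /\ tau (iter k P v).1 <= (iter k P v).2.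
Proof.
move=> hv; elim: k => [|k [IH1 IH2]] /=; first by rewrite subn0.
case: (posnP (iter k P v).2) => h0.
  rewrite (time0 IH2 h0) parent_root /=; rewrite tau_r; split => //; lia.
have [h1 h2] := parent_step IH2 h0; split => //; lia.
Qed.

Definition A (x : 'I_n) (s : nat) : loc n := iter (L - s) P (x, L).

Lemma A_time x {s} : s <= L -> (A x s).2 = s /\ tau (A x s).1 <= s.
Proof.
move=> hs; have [h1 h2] := iter_time (L - s) (tau_le x : tau (x, L).1 <= (x, L).2).
rewrite /A h1 /= in h2 *; split; lia.
Qed.

Lemma A_pair x {s} : s <= L -> A x s = ((A x s).1, s).
Proof. by move=> hs; have [h1 _] := A_time x hs; move: h1; case: (A x s) => a b /= ->. Qed.

Lemma A_iter x {s s'} : s' <= s -> s <= L -> A x s' = iter (s - s') P (A x s).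
Proof. by move=> h1 h2; rewrite /A -iterD; congr iter; lia. Qed.

Lemma A_P x {s} : 0 < s -> s <= L -> A x s.-1 = P (A x s).
Proof. move=> h1 h2; rewrite (A_iter x (s' := s.-1) _ h2); last lia.
by have -> : s - s.-1 = 1 by lia. Qed.

Lemma A0 x : A x 0 = (r, 0).
Proof. have [h1 h2] := A_time x (leq0n L); apply: time0 => //; by rewrite h1. Qed.

Lemma persist_k x s k : s + k <= L -> tau (A x (s + k)).1 <= s ->
  (A x s).1 = (A x (s + k)).1.
Proof.
elim: k => [|k IH] hk ht; first by rewrite addn0.
have hP : A x (s + k) = P (A x (s + k.+1)).
  by rewrite -(A_P x (s := s + k.+1)) //; [congr A; lia | lia].
have [e1 e2] := A_time x hk.
have [f1 f2] := A_time x (leqnn L).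
have hk' : s + k.+1 <= L by [].
have [g1 g2] := A_time x hk'.
have hA : (A x (s + k)).1 = (A x (s + k.+1)).1.
  by rewrite hP parent_keep // g1; lia.
rewrite IH; [by [] | lia | by rewrite hA].
Qed.

Lemma persist x u s : s <= u -> u <= L -> tau (A x u).1 <= s ->
  (A x s).1 = (A x u).1.
Proof.
move=> h1 h2; have -> : u = s + (u - s) by lia.
by apply: persist_k; lia.
Qed.

Definition f (x : 'I_n) (s : nat) (q : 'I_n) : bool :=
  [exists u : 'I_L.+1, (s <= u) && ((A x u).1 == q)].

Lemma AL x : A x L = (x, L).
Proof. by rewrite /A subnn. Qed.

Lemma f_top x q : f x L q = (x == q).
Proof.
apply/existsP/idP => [[u /andP[h1 /eqP <-]]|/eqP <-].
  have -> : nat_of_ord u = L by have := ltn_ord u; lia.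
  by rewrite AL.
by exists ord_max; rewrite /= leqnn AL /= eqxx.
Qed.

Lemma f_last x s q : tau q <= s -> s <= L -> f x s q = ((A x s).1 == q).
Proof.
move=> h1 h2; apply/existsP/idP => [[u /andP[h3 /eqP h4]]|/eqP h].
  apply/eqP; rewrite -h4; apply: persist => //; last by rewrite h4.
  by have := ltn_ord u; lia.
exists (inord s); rewrite inordK; last lia.
by rewrite leqnn h eqxx.
Qed.

Lemma f_self x s : s <= L -> f x s (A x s).1.
Proof. move=> h; apply/existsP; exists (inord s); rewrite inordK ?leqnn ?eqxx //; lia. Qed.

Lemma f_pred x s a : 0 < s -> s <= L ->
  f x s.-1 a = f x s a || ((A x s.-1).1 == a).
Proof.
move=> h0 h1; apply/existsP/idP.
  case=> u /andP[h2 h3].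
  case: (ltnP s.-1 u) => h4.
    by apply/orP; left; apply/existsP; exists u; rewrite h3 andbT; lia.
  have -> : s.-1 = u by lia.
  by rewrite h3 orbT.
case/orP => [/existsP [u /andP[h2 h3]]|h].
  by exists u; rewrite h3 andbT; lia.
exists (inord s.-1); rewrite inordK ?leqnn ?h //; lia.
Qed.

Lemma sum_single (Q : pred 'I_n) (F : 'I_n -> bool) c :
  (forall b, Q b -> F b -> b = c) ->
  \big[addb/false]_(b | Q b) F b = Q c && F c.
Proof.
move=> H; case hQ: (Q c) => /=.
  rewrite (bigD1 c) //= big1 ?addbF // => b /andP[hb bc].
  by apply/negbTE/negP => /(H _ hb) /eqP; rewrite (negbTE bc).
by rewrite big1 // => b hb; apply/negbTE/negP => /(H _ hb) e; subst; rewrite hb in hQ.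
Qed.

Lemma orb_xor (a b : bool) : ~~ (a && b) -> a || b = a (+) b.
Proof. by case: a; case: b. Qed.

Lemma f_step x s a : 0 < s -> s <= L ->
  f x s.-1 a = f x s a (+)
    \big[addb/false]_(b | [&& b != r, tau b == s & par b == a]) f x s b.
Proof.
move=> h0 h1; rewrite f_pred //.
have [e1 e2] := A_time x h1.
set c := (A x s).1 in e2 *.
rewrite (@sum_single _ _ c); last first.
  move=> b /and3P[_ /eqP hb _] hf.
  by move: hf; rewrite f_last ?hb // => /eqP.
rewrite f_self // andbT.
have hA : A x s.-1 = P (A x s) by apply: A_P.
case: (ltnP (tau c) s) => hc.
  have hs : tau c == s = false by apply/negbTE; lia.
  rewrite hs andbF addbF hA parent_keep ?e1 //=.
  case: (c =P a) => [<-|]; last by rewrite orbF.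
  by rewrite f_self.
have ec : tau c = s by lia.
have cr : c != r by apply/eqP => cr; rewrite -ec cr tau_r in h0.
rewrite ec eqxx cr /=.
have hpar : (A x s.-1).1 = par c.
  rewrite hA (A_pair x h1) /parent -/c ec ltnn (negbTE cr) //.
rewrite hpar; apply: orb_xor; apply/negP => /andP[hf /eqP hpa].
have tp := tau_par cr.
move: hf; rewrite f_last; last by [] ; last by rewrite -hpa; lia.
rewrite -/c => /eqP hcp.
by move: tp; rewrite hpa -hcp ltnn.
Qed.

Lemma back_eq i j d : d <= L -> forall a,
  (back L r par tau d (ZZ i j)).1 a = false /\
  (back L r par tau d (ZZ i j)).2 a = f i (L - d) a (+) f j (L - d) a.
Proof.
elim: d => [|d IH] hd a.
  by rewrite subn0 /= !f_top [i == a]eq_sym [j == a]eq_sym.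
have IH' := IH (ltnW hd).
rewrite /= /layer_conj /=; split.
  by rewrite (proj1 (IH' a)) (proj1 (IH' (par a))) !andbF.
rewrite (proj2 (IH' a)).
rewrite (eq_bigr (fun b => f i (L - d) b (+) f j (L - d) b)); last first.
  by move=> b _; rewrite (proj2 (IH' b)).
rewrite big_split /=.
have -> : L - d.+1 = (L - d).-1 by lia.
rewrite !f_step; try lia.
set a1 := f i _ a; set a2 := f j _ a.
set b1 := \big[addb/false]_(_ | _) f i _ _.
set b2 := \big[addb/false]_(_ | _) f j _ _.
by case: a1; case: a2; case: b1; case: b2.
Qed.

Lemma detected_eq i j q t y : tau q <= t -> t <= L ->
  detected L r par tau i j q t y = ((A i t).1 == q) (+) ((A j t).1 == q).
Proof.
move=> h1 h2; rewrite /detected.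
have [e1 e2] := back_eq i j (L - t) (leq_subr t L) q.
rewrite e1 andbF addbF e2.
have -> : L - (L - t) = t by lia.
by rewrite !f_last.
Qed.

Lemma anc_leaf x v : anc r par tau (x, L) v <-> exists2 s, s <= L & v = A x s.
Proof.
split.
- case=> k <-; case: (leqP k L) => hk.
    by exists (L - k); [lia | rewrite /A; congr iter; lia].
  exists 0 => //; rewrite A0.
  have -> : k = (k - L) + L by lia.
  rewrite iterD.
  have -> : iter L P (x, L) = A x 0 by rewrite /A subn0.
  by rewrite A0 iter_root.
- by case=> s hs ->; exists (L - s).
Qed.

Lemma anc_A x s s' : s' <= s -> s <= L -> anc r par tau (A x s) (A x s').
Proof. by move=> h1 h2; exists (s - s'); rewrite (A_iter x h1 h2). Qed.

Lemma anc_antisym (u w : loc n) : tau u.1 <= u.2 -> u <> (r, 0) ->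
  anc r par tau u w -> anc r par tau w u -> u = w.
Proof.
move=> hu hr [k1 e1] [k2 e2].
have e : iter (k2 + k1) P u = u by rewrite iterD e1.
have [t1 _] := iter_time (k2 + k1) hu; rewrite e in t1.
case: (posnP u.2) => h0; first by case: hr; apply: time0.
have k0 : k1 = 0 by lia.
by rewrite -e1 k0.
Qed.

Lemma lca_sym {a b w} : is_lca r par tau a b w -> is_lca r par tau b a w.
Proof. by case=> h1 h2 h3; split => // w' x y; apply: h3. Qed.

Lemma S_side i j q t : tau q <= t -> t <= L -> (q, t) <> (r, 0) ->
  (exists w, is_lca r par tau (i, L) (j, L) w /\
     path_up r par tau (i, L) w (corr_edge r par tau (q, t))) <->
  ((A i t).1 == q) && ((A j t).1 != q).
Proof.
move=> h1 h2 hr; split.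
- case=> w [[hiw hjw hlca] [v [ev hiv hvw vw]]].
  have vq : v = (q, t) by case: ev.
  subst v.
  case/anc_leaf: hiv => s hs eA.
  have st : s = t by have [e _] := A_time i hs; rewrite -eA in e.
  subst s.
  rewrite -eA eqxx /=; apply/eqP => hj.
  have eJ : A j t = (q, t) by rewrite (A_pair j h2) hj.
  have hwq : anc r par tau w (q, t).
    apply: hlca; first by apply/anc_leaf; exists t.
    by apply/anc_leaf; exists t; rewrite ?eJ.
  by apply: vw; apply: anc_antisym.
- case/andP => /eqP hi hj.
  pose Q s := (s <= L) && (A i s == A j s).
  have Q0 : exists s, Q s by exists 0; rewrite /Q !A0 eqxx andbT.
  have Qb : forall s, Q s -> s <= L by move=> s /andP[].
  case: (ex_maxnP Q0 Qb) => sm /andP[hsm /eqP eA] hmax.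
  exists (A i sm); split.
  + split.
    * by apply/anc_leaf; exists sm.
    * by apply/anc_leaf; exists sm.
    * move=> w' /anc_leaf [u hu ->] /anc_leaf [u' hu' e'].
      have uu : u = u'.
        have [a1 _] := A_time i hu; have [a2 _] := A_time j hu'.
        by move: a1; rewrite e' a2 => ->.
      subst u'.
      have hle : u <= sm by apply: hmax; rewrite /Q hu e' eqxx.
      exact: anc_A.
  + have eI : A i t = (q, t) by rewrite (A_pair i h2) hi.
    have hst : sm < t.
      rewrite ltnNge; apply/negP => hts.
      move: hj; rewrite (A_iter j hts hsm) -eA -(A_iter i hts hsm) hi eqxx.
      by [].
    exists (q, t); split => //.
    * by rewrite -eI; apply/anc_leaf; exists t.
    * by rewrite -eI; apply: anc_A => //; lia.
    * move=> e; have [a1 _] := A_time i hsm.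
      by rewrite -e /= in a1; lia.
Qed.

Lemma main_in (i j q : 'I_n) (t : nat) (y : bool)
  (Ht : tau q <= t <= L) :
  detected L r par tau i j q t y <->
  ((q, t) <> (r, 0) /\ S_set L r par tau i j (corr_edge r par tau (q, t))).
Proof.
case/andP: Ht => h1 h2.
rewrite detected_eq //; split.
- move=> hd.
  have hr : (q, t) <> (r, 0).
    by case=> eq et; subst; move: hd; rewrite !A0 /= eqxx.
  split => //.
  move: hd; case ha: (_ == q); case hb: (_ == q) => //= _.
  + have := proj2 (S_side i j q t h1 h2 hr); rewrite ha hb => /(_ isT) [w [hl hp]].
    by exists w; split => //; left.
  + have := proj2 (S_side j i q t h1 h2 hr); rewrite ha hb => /(_ isT) [w [hl hp]].
    by exists w; split; [apply: lca_sym | right].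
- case=> hr [w [hl [hp|hp]]].
  + have := proj1 (S_side i j q t h1 h2 hr) (ex_intro _ w (conj hl hp)).
    by case/andP => -> /negbTE ->.
  + have := proj1 (S_side j i q t h1 h2 hr) (ex_intro _ w (conj (lca_sym hl) hp)).
    by case/andP => -> /negbTE ->.
Qed.

End Proofs.

Theorem lemma1 (n L : nat) (r : 'I_n) (par : 'I_n -> 'I_n) (tau : 'I_n -> nat)
  (Hc : ghz_circuit L r par tau)
  (i j q : 'I_n) (t : nat) (y : bool)
  (Ht : tau q <= t <= L) :
  detected L r par tau i j q t y <->
  ((q, t) <> (r, 0) /\ S_set L r par tau i j (corr_edge r par tau (q, t))).
Proof. exact: (@main_in n L r par tau Hc i j q t y Ht). Qed.
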